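(* Let $C\in\mathcal R_{\rm dec}$ with $|C|\ge2$ and root share decomposition $C=C_1\circ_kC_2$, where $C_1,C_2$ are decorated by inheritance from $C$ and each is labeled by its own intersection order. Let $d,d_1,d_2$ be the decorations of the base chords of $C,C_1,C_2$ respectively. Then for every integer $l$ with $1<l<b(C)$, $$\hat a_C\,a_{d,\,b(C)-l}=\hat a_{C_1}\,a_{d_1,\,b(C_1)-1}\;\hat a_{C_2}\,a_{d_2,\,b(C_2)-l+1}.$$
   Context: Fix a commutative ring $A$ and elements $a_{k,i}\in A$ ($k\ge1$, $i\ge0$). Chord diagrams. A rooted chord diagram of size $n$ is a fixed-point-free involution $C$ of $\{1,\dots,2n\}$, viewed as $n$ chords (transpositions) $(x\,y)$ with $x<y$; the chord containing $1$ is the root chord; $|C|=n$. Chords $(x\,y),(x'\,y')$ cross if $x<x'<y<y'$ or $x'<x<y'<y$. $C$ is connected if the graph whose vertices are the chords, with edges joining crossing chords, is connected. For a set of $m$ chords with $2m$ distinct positive integer endpoints, $\mathrm{norm}$ of it is the chord diagram on $\{1,\dots,2m\}$ obtained by replacing each endpoint by its rank among the $2m$ endpoints. Intersection order. The chords of a rooted connected chord diagram of size $n$ are labeled $1,\dots,n$ recursively: the root chord gets the first available label; the remaining chords split into connected components (w.r.t. crossing); the components are processed in increasing order of their smallest endpoint, each regarded as a rooted connected chord diagram rooted at its chord with smallest endpoint and labeled recursively with the next block of consecutive labels. ''Chord $i$'' means the chord with label $i$. Terminal and base chords. Chord $i$ is terminal if it crosses no chord $j$ with $j>i$. If $t_0<t_1<\dots<t_m$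 are the terminal labels, the base chord is $b(C)=t_0$. Insertion of chord diagrams. For $C$ of size $n$ with chords $(x_1y_1),\dots,(x_ny_n)$, root $(x_1y_1)$ ($x_1=1$), $D$ of size $m$ with chords $(x'_iy'_i)$, and $1\le k\le 2m-1$, $C\circ_kD$ is the chord diagram of size $n+m$ with chords $(1,y_1+k)$, $(x_i+k,y_i+k)$ ($2\le i\le n$), $(H(x'_i),H(y'_i))$ ($1\le i\le m$), where $H(x)=x+1$ if $x\le k$ and $H(x)=x+2n$ otherwise. Root share decomposition. For rooted connected $C$ with $|C|\ge2$, let $C_1$ be the connected component (of the chords other than the root) having the smallest endpoint among such components. There is a unique $i$ with $C=C'\circ_iC''$, where $C'=\mathrm{norm}(C\setminus C_1)$, $C''=\mathrm{norm}(C_1)$. (In the lemma, $C_1$ denotes $C'$ and $C_2$ denotes $C''$.) Decorations. A decorated chord diagram is a rooted connected chord diagram with a positive integer $d_i$ on each chord $i$; $\mathcal R_{\rm dec}$ is the set of all of them. Monomial. With terminal labels $t_0<\dots<t_m$, $\hat a_C=\prod_{c=1}^m a_{d_{t_c},t_c-t_{c-1}}\cdot\prod_{i\text{ non-terminal}}a_{d_i,0}$. *)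

(* Defs.v *)
From HB Require Import structures.
From mathcomp Require Import all_boot all_order all_algebra.
Set Implicit Arguments. Unset Strict Implicit. Unset Printing Implicit Defensive.
Import GRing.Theory.

(* A decorated chord is ((x, y), d): endpoints x < y and decoration d.
   A (decorated) chord diagram is a list of such chords (order of the list
   is irrelevant). *)
Definition dchord := ((nat * nat) * nat)%type.
Definition lo (c : dchord) : nat := c.1.1.
Definition hi (c : dchord) : nat := c.1.2.
Definition deco (c : dchord) : nat := c.2.

Definition endpoints (D : seq dchord) : seq nat :=
  flatten [seq [:: lo c; hi c] | c <- D].

Definition is_diagram (D : seq dchord) : bool :=
  all (fun c => lo c < hi c) D && perm_eq (endpoints D) (iota 1 (2 * size D)).

Definition cross (c c' : dchord) : bool :=
  ((lo c < lo c') && (lo c' < hi c) && (hi c < hi c')) ||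
  ((lo c' < lo c) && (lo c < hi c') && (hi c' < hi c)).

Definition sortlo (D : seq dchord) : seq dchord :=
  sort (fun c c' => lo c <= lo c') D.

Fixpoint grow (n : nat) (D S : seq dchord) : seq dchord :=
  if n is n'.+1 then grow n' D [seq e <- D | (e \in S) || has (cross e) S]
  else S.

Definition comp (D : seq dchord) (c : dchord) : seq dchord :=
  grow (size D) D [:: c].

Fixpoint components (fuel : nat) (D : seq dchord) : seq (seq dchord) :=
  match fuel with
  | 0 => [::]
  | f.+1 =>
    match sortlo D with
    | [::] => [::]
    | c :: _ => let K := comp D c in K :: components f [seq e <- D | e \notin K]
    end
  end.

Definition connected (D : seq dchord) : bool :=
  match sortlo D with
  | [::] => false
  | r :: _ => all (fun e => e \in comp D r) D
  end.

Definition is_Rdec (D : seq dchord) : bool :=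
  [&& is_diagram D, uniq D, connected D & all (fun c => 0 < deco c) D].

(* intersection order: the chords listed in label order 1, 2, ..., n *)
Fixpoint ordr (fuel : nat) (D : seq dchord) : seq dchord :=
  match fuel with
  | 0 => [::]
  | f.+1 =>
    match sortlo D with
    | [::] => [::]
    | r :: rest => r :: flatten [seq ordr f K | K <- components (size rest) rest]
    end
  end.

Definition labeled (D : seq dchord) : seq dchord := ordr (size D) D.

Definition dummy : dchord := ((0, 0), 0).

(* chord with label i (1-based) *)
Definition chord_lab (D : seq dchord) (i : nat) : dchord :=
  nth dummy (labeled D) i.-1.

Definition dec_lab (D : seq dchord) (i : nat) : nat := deco (chord_lab D i).

Definition terminal (D : seq dchord) (i : nat) : bool :=
  ~~ has (fun j => cross (chord_lab D i) (chord_lab D j)) (iota i.+1 (size D - i)).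

Definition terminals (D : seq dchord) : seq nat :=
  [seq i <- iota 1 (size D) | terminal D i].

Definition base (D : seq dchord) : nat := head 0 (terminals D).

Definition base_deco (D : seq dchord) : nat := dec_lab D (base D).

Definition ahat (A : comPzRingType) (a : nat -> nat -> A) (D : seq dchord) : A :=
  let ts := terminals D in
  (\prod_(p <- zip (behead ts) ts) a (dec_lab D p.1) (p.1 - p.2)%N) *
  (\prod_(i <- iota 1 (size D) | ~~ terminal D i) a (dec_lab D i) 0).

Definition rank (D : seq dchord) (x : nat) : nat :=
  (count (fun e => e < x) (endpoints D)).+1.

Definition norm (D : seq dchord) : seq dchord :=
  [seq ((rank D (lo c), rank D (hi c)), deco c) | c <- D].

Definition first_comp (D : seq dchord) : seq dchord :=
  let rest := behead (sortlo D) in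
  head [::] (components (size rest) rest).

Definition rsd1 (D : seq dchord) : seq dchord :=
  norm [seq e <- D | e \notin first_comp D].

Definition rsd2 (D : seq dchord) : seq dchord :=
  norm (first_comp D).

(* Main.v *)
Require Import Defs.
From HB Require Import structures.
From mathcomp Require Import all_boot all_order all_algebra.
From mathcomp Require Import zify ring.
Import GRing.Theory.

Module Helpers.
Set Implicit Arguments. Unset Strict Implicit.


Lemma eq_in_sort_ (T : eqType) (r1 r2 : rel T) (s : seq T) :
  {in s &, r1 =2 r2} -> sort r1 s = sort r2 s.
Proof.
move=> H.
have [t ->] := all_sigP (allss s).
rewrite sort_map.
apply: (map_sort (f := sval)).
move=> x y /=. by rewrite H ?(svalP x) ?(svalP y).
Qed.

Lemma cross_sym c c' : cross c c' = cross c' c.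
Proof. by rewrite /cross orbC. Qed.

Definition step (D S : seq dchord) := [seq e <- D | (e \in S) || has (cross e) S].

Lemma grow_S n D S : grow n.+1 D S = step D (grow n D S).
Proof. by elim: n S => [|n IH] S //=; rewrite -IH. Qed.

Lemma grow_sub n D S (E : seq dchord) : {subset S <= E} -> {subset D <= E} -> {subset grow n D S <= E}.
Proof.
move=> hS hD; case: n => [|n] //; rewrite grow_S => x; rewrite mem_filter => /andP[_]; exact: hD.
Qed.

Lemma step_mono D S S' : {subset S <= S'} -> {subset step D S <= step D S'}.
Proof.
move=> h x; rewrite !mem_filter => /andP[/orP[xS|hx] ->]; rewrite andbT.
  by rewrite h.
apply/orP; right; case/hasP: hx => y yS cy; apply/hasP; exists y => //; exact: h.
Qed.

Lemma step_eqi D S S' : S =i S' -> step D S = step D S'.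
Proof.
move=> h; apply: eq_filter => e; rewrite h; congr orb; exact: eq_has_r.
Qed.

Lemma grow_mem_c n D c : c \in D -> c \in grow n D [:: c].
Proof.
move=> cD; elim: n => [|n IH]; first by rewrite inE.
by rewrite grow_S mem_filter IH cD.
Qed.

Lemma count_le_in (T : eqType) (a b : pred T) s :
  {in s, forall x, a x -> b x} -> count a s <= count b s.
Proof.
elim: s => //= x s IH h; apply: leq_add.
  by case ax: (a x) => //; rewrite (h x (mem_head _ _) ax).
by apply: IH => y ys; apply: h; rewrite inE ys orbT.
Qed.

Lemma count_sub_eq (T : eqType) (a b : pred T) s :
  {in s, forall x, a x -> b x} -> count a s = count b s -> {in s, forall x, b x -> a x}.
Proof.
elim: s => //= x s IH h hc.
have h' : {in s, forall y, a y -> b y} by move=> y ys; apply: h; rewrite inE ys orbT.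
have le1 := count_le_in h'.
have hx : (a x <= b x)%N by case ax: (a x) => //; rewrite (h x (mem_head _ _) ax).
have e1 : a x = b x :> nat by lia.
have e2 : count a s = count b s by lia.
move=> y; rewrite inE => /orP[/eqP-> bx|ys]; first by case: (a x) e1; rewrite bx.
exact: IH.
Qed.

Lemma sub_step D S : {subset S <= D} -> {subset S <= step D S}.
Proof. by move=> h x xS; rewrite mem_filter xS h. Qed.

Lemma closure_comp (D : seq dchord) (c x y : dchord) : c \in D -> y \in D -> x \in Defs.comp D c -> cross y x -> y \in Defs.comp D c.
Proof.
move=> cD yD; rewrite /Defs.comp.
set Sk := fun k => grow k D [:: c].
have subD : forall k, {subset Sk k.+1 <= D}.
  by move=> k z; rewrite /Sk grow_S mem_filter => /andP[].
have mono : forall k, {subset Sk k <= Sk k.+1}.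
  move=> k; rewrite /Sk (grow_S k); apply: sub_step.
  case: k => [|k]; first by move=> z; rewrite inE => /eqP->.
  exact: subD.
pose mu (S : seq dchord) := count (fun e => e \in S) D.
have P : forall k, (k.+1 <= mu (Sk k.+1)) || (step D (Sk k.+1) == Sk k.+1).
  elim=> [|k IH].
    apply/orP; left; rewrite -has_count; apply/hasP; exists c => //.
    by rewrite /Sk grow_S mem_filter inE eqxx cD.
  case/orP: IH => [le|/eqP fix1].
    have le2 : mu (Sk k.+1) <= mu (Sk k.+2).
      by apply: count_le_in => z _; apply: mono.
    case: (ltngtP (mu (Sk k.+1)) (mu (Sk k.+2))) le2 => // [lt|eq] _.
      by apply/orP; left; apply: leq_trans lt.
    have eqi : Sk k.+2 =i Sk k.+1.
      move=> z; apply/idP/idP; last exact: mono.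
      move=> zS; have zD := subD _ _ zS.
      have := @count_sub_eq _ (fun e => e \in Sk k.+1) (fun e => e \in Sk k.+2) D (fun w _ => mono k.+1 w) eq.
      by move/(_ z zD zS).
    apply/orP; right; rewrite [X in _ == X]/Sk grow_S -/(Sk k.+1) (step_eqi D eqi) /Sk grow_S //.
  apply/orP; right.
  have e : Sk k.+2 = Sk k.+1 by rewrite /Sk grow_S -/(Sk k.+1) fix1.
  by rewrite e fix1.
have [n Hn] : exists n, size D = n.+1.
  by exists (size D).-1; rewrite prednK //; case: (D) cD.
rewrite Hn => xS cyx.
case/orP: (P n) => [le|/eqP fix1].
  have : all (fun e => e \in Sk n.+1) D.
    rewrite all_count eqn_leq count_size Hn; exact: le.
  by move/allP/(_ y yD).
suff : y \in step D (Sk n.+1) by rewrite fix1.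
rewrite mem_filter yD andbT; apply/orP; right; apply/hasP; exists x => //.
Qed.

Lemma components_unfold n D : components n.+1 D =
  match sortlo D with
  | [::] => [::]
  | c :: _ => let K := Defs.comp D c in K :: components n [seq e <- D | e \notin K]
  end.
Proof. by []. Qed.

Lemma ordr_unfold n D : ordr n.+1 D =
  match sortlo D with
  | [::] => [::]
  | r :: rest => r :: flatten [seq ordr n K | K <- components (size rest) rest]
  end.
Proof. by []. Qed.

Lemma size_sortlo D : size (sortlo D) = size D.
Proof. by rewrite /sortlo size_sort. Qed.

Lemma mem_sortlo D : sortlo D =i D.
Proof. exact: mem_sort. Qed.

Lemma comp_eq (D : seq dchord) c : c \in D ->
  exists p : pred dchord, Defs.comp D c = filter p D /\ p c.
Proof.
move=> cD; rewrite /Defs.comp.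
have [n Hn] : exists n, size D = n.+1.
  by exists (size D).-1; rewrite prednK //; case: (D) cD.
rewrite Hn grow_S; eexists; split; first reflexivity.
by rewrite /= grow_mem_c.
Qed.

Lemma rest_lt (D : seq dchord) c : c \in D ->
  size [seq e <- D | e \notin Defs.comp D c] < size D.
Proof.
move=> cD; have [p [-> pc]] := comp_eq cD.
have -> : [seq e <- D | e \notin filter p D] = filter (predC p) D.
  by apply: eq_in_filter => e eD; rewrite mem_filter eD andbT.
rewrite size_filter -(count_predC p D) -addn1 addnC leq_add2r.
by rewrite -has_count; apply/hasP; exists c.
Qed.

Lemma components_sub n D K : K \in components n D -> {subset K <= D}.
Proof.
elim: n D => [|n IH] D //; rewrite components_unfold.
case Hs: (sortlo D) => [|c s] //=; rewrite inE => /orP[/eqP->|KI].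
  have cD : c \in D by rewrite -mem_sortlo Hs mem_head.
  have [p [-> _]] := comp_eq cD; by move=> x; rewrite mem_filter => /andP[].
by move=> x xK; have := IH _ KI x xK; rewrite mem_filter => /andP[].
Qed.

Lemma components_size n D K : K \in components n D -> size K <= size D.
Proof.
elim: n D => [|n IH] D //; rewrite components_unfold.
case Hs: (sortlo D) => [|c s] //=; rewrite inE => /orP[/eqP->|KI].
  have cD : c \in D by rewrite -mem_sortlo Hs mem_head.
  have [p [-> _]] := comp_eq cD; by rewrite size_filter count_size.
apply: leq_trans (IH _ KI) _; rewrite size_filter count_size //.
Qed.

Lemma sortlo_nil D : sortlo D = [::] -> D = [::].
Proof. by move=> h; apply/eqP; rewrite -size_eq0 -size_sortlo h. Qed.

Lemma components_perm n D : size D <= n -> perm_eq (flatten (components n D)) D.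
Proof.
elim: n D => [|n IH] D.
  by rewrite leqn0 size_eq0 => /eqP->.
move=> hD; rewrite components_unfold.
case Hs: (sortlo D) => [|c s] /=; first by rewrite (sortlo_nil Hs).
have cD : c \in D by rewrite -mem_sortlo Hs mem_head.
have lt := rest_lt cD.
have [p [Hp _]] := comp_eq cD.
have h2 := IH _ (leq_trans (leq_trans lt hD) (leqnn _)).
have e : [seq e <- D | e \notin Defs.comp D c] = filter (predC p) D.
  by rewrite Hp; apply: eq_in_filter => e eD; rewrite mem_filter eD andbT.
have e2 : perm_eq (Defs.comp D c ++ filter (predC p) D) D by rewrite Hp perm_filterC.
apply: (perm_trans _ e2); rewrite perm_cat2l; apply: (perm_trans h2).
by rewrite e.
Qed.

Lemma components_fuel n m D : size D <= n -> size D <= m -> components n D = components m D.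
Proof.
elim: n m D => [|n IH] m D.
  by rewrite leqn0 size_eq0 => /eqP-> _; case: m.
case: m => [|m]; first by move=> _; rewrite leqn0 size_eq0 => /eqP->.
move=> hn hm; rewrite !components_unfold.
case Hs: (sortlo D) => [|c s] //=.
have cD : c \in D by rewrite -mem_sortlo Hs mem_head.
have lt := rest_lt cD.
congr (_ :: _); apply: IH; rewrite -ltnS; exact: leq_trans lt _.
Qed.

Lemma perm_flatten_map (g : seq dchord -> seq dchord) KS :
  (forall K, K \in KS -> perm_eq (g K) K) -> perm_eq (flatten (map g KS)) (flatten KS).
Proof.
elim: KS => //= K KS IH h; rewrite perm_cat ?h ?mem_head //.
by apply: IH => K' K'I; apply: h; rewrite inE K'I orbT.
Qed.

Lemma sortlo_perm D : perm_eq (sortlo D) D.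
Proof. by rewrite /sortlo perm_sort. Qed.

Lemma ordr_perm n D : size D <= n -> perm_eq (ordr n D) D.
Proof.
elim: n D => [|n IH] D.
  by rewrite leqn0 size_eq0 => /eqP->.
move=> hD; rewrite ordr_unfold.
case Hs: (sortlo D) => [|r rest]; first by rewrite (sortlo_nil Hs).
have hp := sortlo_perm D; rewrite Hs in hp.
have hsz : size rest <= n by have := perm_size hp; rewrite /= => e; rewrite -ltnS e.
apply: (perm_trans _ hp); rewrite perm_cons.
apply: (perm_trans _ (components_perm (leqnn (size rest)))).
apply: perm_flatten_map => K KI; apply: IH.
exact: leq_trans (components_size KI) hsz.
Qed.

Lemma ordr_fuel n m D : size D <= n -> size D <= m -> ordr n D = ordr m D.
Proof.
elim: n m D => [|n IH] m D.
  by rewrite leqn0 size_eq0 => /eqP-> _; case: m.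
case: m => [|m]; first by move=> _; rewrite leqn0 size_eq0 => /eqP->.
move=> hn hm; rewrite !ordr_unfold.
case Hs: (sortlo D) => [|r rest] //.
have hp := sortlo_perm D; rewrite Hs in hp.
have hsz := perm_size hp; rewrite /= in hsz.
congr (_ :: flatten _); apply/eq_in_map => K KI.
have := components_size KI => hK.
apply: IH; apply: (leq_trans hK); rewrite -ltnS hsz //.
Qed.

Lemma size_labeled D : size (labeled D) = size D.
Proof. exact/perm_size/ordr_perm. Qed.

Definition good (f : dchord -> dchord) (E : seq dchord) :=
  [/\ {in E &, forall x y, (lo (f x) <= lo (f y)) = (lo x <= lo y)},
      {in E &, forall x y, cross (f x) (f y) = cross x y} &
      {in E &, injective f}].

Section MapInv.
Variables (f : dchord -> dchord) (E : seq dchord).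
Hypothesis gf : good f E.

Lemma mem_map_E e (S : seq dchord) : e \in E -> {subset S <= E} -> (f e \in map f S) = (e \in S).
Proof.
case: gf => _ _ inj eE hS; apply/mapP/idP => [[x xS fx]|eS]; last by exists e.
by rewrite (inj _ _ eE (hS _ xS) fx).
Qed.

Lemma sortlo_map D : {subset D <= E} -> sortlo (map f D) = map f (sortlo D).
Proof.
case: gf => hlo _ _ hD; rewrite /sortlo sort_map; congr map.
by apply: eq_in_sort_ => x y xD yD /=; rewrite hlo ?hD.
Qed.

Lemma step_map D S : {subset D <= E} -> {subset S <= E} ->
  step (map f D) (map f S) = map f (step D S).
Proof.
case: gf => _ hcr _ hD hS; rewrite /step filter_map; congr map.
apply: eq_in_filter => e eD /=; rewrite mem_map_E ?hD //; congr orb.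
rewrite has_map; apply: eq_in_has => x xS /=; by rewrite hcr ?(hD e eD) ?(hS x xS).
Qed.

Lemma grow_map n D S : {subset D <= E} -> {subset S <= E} ->
  grow n (map f D) (map f S) = map f (grow n D S).
Proof.
elim: n S => [|n IH] S hD hS //=.
rewrite -/(step (map f D) (map f S)) step_map // IH //.
by move=> x; rewrite mem_filter => /andP[_ /hD].
Qed.

Lemma comp_map D c : {subset D <= E} -> c \in E ->
  Defs.comp (map f D) (f c) = map f (Defs.comp D c).
Proof.
move=> hD cE; rewrite /Defs.comp size_map -[[:: f c]]/(map f [:: c]) grow_map //.
by move=> x; rewrite inE => /eqP->.
Qed.

Lemma components_map n D : {subset D <= E} ->
  components n (map f D) = map (map f) (components n D).
Proof.
elim: n D => [|n IH] D hD //; rewrite !components_unfold sortlo_map //.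
case Hs: (sortlo D) => [|c s] //=.
have cD : c \in D by rewrite -mem_sortlo Hs mem_head.
rewrite comp_map ?hD //; congr (_ :: _).
have hK : {subset Defs.comp D c <= E}.
  by apply: grow_sub => // x; rewrite inE => /eqP->; apply: hD.
rewrite filter_map -IH; last by move=> x; rewrite mem_filter => /andP[_ /hD].
congr (components n (map f _)); apply: eq_in_filter => e eD /=.
by rewrite mem_map_E ?hD.
Qed.

Lemma ordr_map n D : {subset D <= E} -> ordr n (map f D) = map f (ordr n D).
Proof.
elim: n D => [|n IH] D hD //; rewrite !ordr_unfold sortlo_map //.
case Hs: (sortlo D) => [|r rest] //=.
have hr : {subset rest <= E}.
  by move=> x xr; apply: hD; rewrite -mem_sortlo Hs inE xr orbT.
rewrite size_map components_map // map_flatten -map_comp; congr (_ :: flatten _).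
rewrite -map_comp; apply/eq_in_map => K KI /=; apply: IH => x xK; apply: hr.
exact: (components_sub KI).
Qed.

End MapInv.

Definition nf (D : seq dchord) (c : dchord) : dchord :=
  ((rank D (lo c), rank D (hi c)), deco c).

Lemma lo_nf D c : lo (nf D c) = rank D (lo c). Proof. by []. Qed.
Lemma hi_nf D c : hi (nf D c) = rank D (hi c). Proof. by []. Qed.
Lemma deco_nf D c : deco (nf D c) = deco c. Proof. by []. Qed.

Lemma norm_nf D : norm D = map (nf D) D.
Proof. by []. Qed.

Lemma rank_le D x y : x <= y -> rank D x <= rank D y.
Proof.
move=> le; rewrite /rank ltnS; apply: count_le_in => e _ /= lt; exact: leq_trans lt le.
Qed.

Lemma rank_lt D x y : x \in endpoints D -> x < y -> rank D x < rank D y.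
Proof.
move=> xE lt; rewrite /rank ltnS.
have h1 : count (fun e => e < x) (endpoints D) + count (pred1 x) (endpoints D)
   <= count (fun e => e < y) (endpoints D).
  rewrite -count_predUI.
  have -> : count (predI (fun e => e < x) (pred1 x)) (endpoints D) = 0.
    by apply/eqP; rewrite -leqn0 leqNgt -has_count; apply/hasP => -[z _ /= /andP[lt' /eqP eq]]; rewrite eq ltnn in lt'.
  rewrite addn0; apply: count_le_in => e _ /= /orP[lt'|/eqP->] //; exact: ltn_trans lt' lt.
have h2 : 0 < count (pred1 x) (endpoints D) by rewrite -has_count; apply/hasP; exists x => //=.
lia.
Qed.

Lemma rank_leE D x y : x \in endpoints D -> y \in endpoints D ->
  (rank D x <= rank D y) = (x <= y).
Proof.
move=> xE yE; case: (leqP x y) => h; first exact: rank_le.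
by apply/negbTE; rewrite -ltnNge; apply: rank_lt.
Qed.

Lemma rank_ltE D x y : x \in endpoints D -> y \in endpoints D ->
  (rank D x < rank D y) = (x < y).
Proof.
move=> xE yE; case: (ltnP x y) => h; first exact: rank_lt.
by apply/negbTE; rewrite -leqNgt; apply: rank_le.
Qed.

Lemma lo_end D c : c \in D -> lo c \in endpoints D.
Proof. by move=> cD; apply/flatten_mapP; exists c => //; rewrite mem_head. Qed.

Lemma hi_end D c : c \in D -> hi c \in endpoints D.
Proof. by move=> cD; apply/flatten_mapP; exists c => //; rewrite !inE eqxx orbT. Qed.

Lemma good_nf D : good (nf D) D.
Proof.
split.
- by move=> x y xD yD; rewrite !lo_nf rank_leE ?lo_end.
- move=> x y xD yD; rewrite /cross !lo_nf !hi_nf.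
  have lx := lo_end xD; have ly := lo_end yD; have hx := hi_end xD; have hy := hi_end yD.
  by rewrite (rank_ltE lx ly) (rank_ltE ly hx) (rank_ltE hx hy) (rank_ltE ly lx) (rank_ltE lx hy) (rank_ltE hy hx).
- move=> c1 c2 hx hy e.
  have e1 : lo (nf D c1) = lo (nf D c2) by rewrite e.
  rewrite 2!lo_nf in e1.
  have e2 : hi (nf D c1) = hi (nf D c2) by rewrite e.
  rewrite 2!hi_nf in e2.
  have e3 : deco (nf D c1) = deco (nf D c2) by rewrite e.
  have ex : lo c1 = lo c2.
    by apply/eqP; rewrite eqn_leq -(rank_leE (lo_end hx) (lo_end hy)) -(rank_leE (lo_end hy) (lo_end hx)) e1 leqnn.
  have ey : hi c1 = hi c2.
    by apply/eqP; rewrite eqn_leq -(rank_leE (hi_end hx) (hi_end hy)) -(rank_leE (hi_end hy) (hi_end hx)) e2 leqnn.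
  move: ex ey e3; case: c1 {hx e e1 e2} => [[? ?] ?]; case: c2 {hy} => [[? ?] ?].
  by rewrite /lo /hi /deco /= => -> -> ->.
Qed.


Definition labL (L : seq dchord) i := nth dummy L i.-1.
Definition termL (L : seq dchord) i :=
  ~~ has (fun j => cross (labL L i) (labL L j)) (iota i.+1 (size L - i)).
Definition termsL L := [seq i <- iota 1 (size L) | termL L i].
Definition baseL L := head 0 (termsL L).
Definition decL L i := deco (labL L i).
Definition ahatL (A : comPzRingType) (a : nat -> nat -> A) (L : seq dchord) : A :=
  ((\prod_(p <- zip (behead (termsL L)) (termsL L)) a (decL L p.1) (p.1 - p.2)%N) *
  (\prod_(i <- iota 1 (size L) | ~~ termL L i) a (decL L i) 0%N))%R.

Lemma ahat_bridge (A : comPzRingType) (a : nat -> nat -> A) D :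
  ahat a D = ahatL a (labeled D).
Proof.
rewrite /ahat /ahatL /terminals /termsL /termL /terminal /dec_lab /decL /chord_lab /labL.
by rewrite size_labeled.
Qed.

Lemma base_bridge D : base D = baseL (labeled D).
Proof.
by rewrite /base /baseL /terminals /termsL /termL /terminal /chord_lab /labL size_labeled.
Qed.

Lemma base_deco_bridge D : base_deco D = decL (labeled D) (baseL (labeled D)).
Proof. by rewrite /base_deco -base_bridge. Qed.

Lemma labL_map g L i : i.-1 < size L -> labL (map g L) i = g (labL L i).
Proof. by move=> h; rewrite /labL (nth_map dummy). Qed.

Lemma labL_out L i : size L <= i.-1 -> labL L i = dummy.
Proof. by move=> h; rewrite /labL nth_default. Qed.

Lemma termL_map g L : {in L &, forall x y, cross (g x) (g y) = cross x y} ->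
  termL (map g L) =1 termL L.
Proof.
move=> hc i; rewrite /termL size_map.
case: (ltnP i.-1 (size L)) => hi.
  congr negb; apply: eq_in_has => j; rewrite mem_iota => /andP[h1 h2].
  have hj : j.-1 < size L by move: hi h1 h2; clear; set n := size L; rewrite -!subn1; lia.
  by rewrite /= (labL_map g hi) (labL_map g hj) hc // mem_nth.
have -> : size L - i = 0 by move: hi; rewrite -subn1; lia.
by [].
Qed.

Lemma decL_map g L : {in L, forall x, deco (g x) = deco x} -> decL (map g L) =1 decL L.
Proof.
move=> hd i; rewrite /decL.
case: (ltnP i.-1 (size L)) => hi; first by rewrite labL_map // hd // mem_nth.
by rewrite !labL_out ?size_map.
Qed.

Lemma ahatL_ext (A : comPzRingType) (a : nat -> nat -> A) L L' :
  size L = size L' -> termL L =1 termL L' -> decL L =1 decL L' ->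
  [/\ ahatL a L = ahatL a L', baseL L = baseL L' & decL L (baseL L) = decL L' (baseL L')].
Proof.
move=> hs ht hd.
have eT : termsL L = termsL L' by rewrite /termsL hs; apply: eq_filter.
split; last first.
- by rewrite /baseL eT hd.
- by rewrite /baseL eT.
rewrite /ahatL eT hs; congr (_ * _)%R.
  by apply: eq_bigr => p _; rewrite hd.
by apply: eq_big => [i|i _]; rewrite ?ht ?hd.
Qed.

Section PP.
Variable A : comPzRingType.
Local Open Scope ring_scope.

Fixpoint pp (w : nat -> nat -> A) (x : nat) (s : seq nat) : A :=
  if s is y :: s' then w y (y - x)%N * pp w y s' else 1.

Lemma pairs_pp (w : nat -> nat -> A) ts :
  \prod_(p <- zip (behead ts) ts) w p.1 (p.1 - p.2)%N = if ts is x :: s then pp w x s else 1.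
Proof.
case: ts => [|x s] /=; first by rewrite big_nil.
elim: s x => [|y s IH] x /=; first by rewrite big_nil.
by rewrite big_cons /= IH.
Qed.

Lemma pp_cat w x s1 s2 : pp w x (s1 ++ s2) = pp w x s1 * pp w (last x s1) s2.
Proof. by elim: s1 x => [|y s1 IH] x /=; rewrite ?mul1r // IH mulrA. Qed.

Lemma pp_shift w k x s :
  pp w (k + x) (map (addn k) s) = pp (fun y d => w (k + y)%N d) x s.
Proof. by elim: s x => [|y s IH] x //=; rewrite IH subnDl. Qed.

Lemma pp_eq_in w w' x s : {in s, forall y d, w y d = w' y d} -> pp w x s = pp w' x s.
Proof.
elim: s x => [|y s IH] x //= h; rewrite h ?mem_head // IH // => z zs d.
by apply: h; rewrite inE zs orbT.
Qed.

End PP.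

Ltac sl := repeat match goal with
  | |- context [@size ?T ?s] => progress change (@size T s) with (@size dchord s)
  | H : context [@size ?T ?s] |- _ => progress change (@size T s) with (@size dchord s) in H
  end; lia.

Section Core.
Variables (r : dchord) (L2 L1 : seq dchord).
Hypothesis nocross : forall x y, x \in L2 -> y \in L1 -> ~~ cross x y.
Let L := r :: L2 ++ L1.
Let M := r :: L1.

Lemma sizeL : size L = (size L2 + size L1).+1.
Proof. by rewrite /L /= size_cat. Qed.

Lemma labL_L2 j : 0 < j <= size L2 -> labL L j.+1 = labL L2 j.
Proof.
case: j => // j /andP[_ hj]; rewrite /labL /= nth_cat.
by rewrite hj.
Qed.

Lemma labL_L1 t : 1 < t -> labL L (size L2 + t) = labL M t.
Proof.
case: t => [|[|t]] // _; rewrite /labL /M /L.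
have -> : (size L2 + t.+2).-1 = (size L2 + t).+1 by lia.
by rewrite /= nth_cat ltnNge leq_addr /= addKn.
Qed.

Lemma labL_1L : labL L 1 = r. Proof. by []. Qed.
Lemma labL_1M : labL M 1 = r. Proof. by []. Qed.

Lemma termL_L2 j : 0 < j <= size L2 -> termL L j.+1 = termL L2 j.
Proof.
move=> /andP[j0 jn]; rewrite /termL sizeL.
have -> : (size L2 + size L1).+1 - j.+1 = (size L2 - j) + size L1 by lia.
rewrite iotaD has_cat.
have -> : has (fun k => cross (labL L j.+1) (labL L k)) (iota (j.+2 + (size L2 - j)) (size L1)) = false.
  apply/negbTE/hasPn => k; rewrite mem_iota => /andP[k1 k2].
  have ht : 1 < k - size L2 by lia.
  have -> : k = size L2 + (k - size L2) by lia.
  rewrite labL_L1 // labL_L2 ?j0 //; apply: nocross.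
    by rewrite /labL mem_nth //; move: j0 jn; case: (j).
  move: ht k2; case Ht: (k - size L2) => [|[|t']] // _ k2.
  rewrite /labL /M /= mem_nth //; move: Ht k2 jn; clear; sl.
rewrite orbF.
have -> : iota j.+2 (size L2 - j) = map (addn 1) (iota j.+1 (size L2 - j)) by rewrite -iotaDl.
rewrite has_map; congr negb; apply: eq_in_has => k; rewrite mem_iota => /andP[k1 k2] /=.
by rewrite add1n labL_L2 ?j0 // labL_L2 //; lia.
Qed.

Lemma termL_L1 t : 1 < t -> termL L (size L2 + t) = termL M t.
Proof.
move=> ht; rewrite /termL sizeL.
have -> : iota (size L2 + t).+1 ((size L2 + size L1).+1 - (size L2 + t)) =
          map (addn (size L2)) (iota t.+1 (size M - t)).
  rewrite -iotaDl addnS; congr iota; rewrite /M /=; sl.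
rewrite has_map; congr negb; apply: eq_in_has => k; rewrite mem_iota => /andP[k1 _] /=.
rewrite !labL_L1 //; sl.
Qed.

Lemma decL_L2 j : 0 < j <= size L2 -> decL L j.+1 = decL L2 j.
Proof. by move=> h; rewrite /decL labL_L2. Qed.

Lemma decL_L1 t : 1 < t -> decL L (size L2 + t) = decL M t.
Proof. by move=> h; rewrite /decL labL_L1. Qed.

Lemma termL_last L' : 0 < size L' -> termL L' (size L') = true.
Proof. by move=> _; rewrite /termL subnn. Qed.

End Core.

Lemma core (A : comPzRingType) (a : nat -> nat -> A) r L2 L1 l :
  (forall x y, x \in L2 -> y \in L1 -> ~~ cross x y) ->
  0 < size L2 -> 1 < l < baseL (r :: L2 ++ L1) ->
  (ahatL a (r :: L2 ++ L1) * a (decL (r :: L2 ++ L1) (baseL (r :: L2 ++ L1))) (baseL (r :: L2 ++ L1) - l)%N =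
   ahatL a (r :: L1) * a (decL (r :: L1) (baseL (r :: L1))) (baseL (r :: L1) - 1)%N *
   (ahatL a L2 * a (decL L2 (baseL L2)) (baseL L2 - l + 1)%N))%R.
Proof.
move=> nc n2pos hl.
have eI : iota 1 (size (r :: L2 ++ L1)) = 1 :: map (addn 1) (iota 1 (size L2)) ++
             map (addn (size L2)) (iota 2 (size L1)).
  by rewrite sizeL /= iotaD -!iotaDl [(2 + _)%N]addnC.
have t1 : termL (r :: L2 ++ L1) 1 = false.
  apply/negbTE/negP => h; move: hl; rewrite /baseL /termsL eI /= h /=; sl.
set T1' := filter (termL (r :: L1)) (iota 2 (size L1)).
have memT1 : forall y, y \in T1' -> 1 < y by move=> y; rewrite mem_filter mem_iota => /andP[_ /andP[]].
have eT : termsL (r :: L2 ++ L1) = map (addn 1) (termsL L2) ++ map (addn (size L2)) T1'.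
  rewrite /termsL eI /= t1 filter_cat !filter_map /T1'; congr (_ ++ _); congr map;
    apply: eq_in_filter => j; rewrite mem_iota => /andP[j1 j2] /=.
    by rewrite add1n (termL_L2 r nc) //; sl.
  by rewrite termL_L1.
have eTM : termsL (r :: L1) = if termL (r :: L1) 1 then 1 :: T1' else T1'.
  by rewrite /termsL /=; case: (termL _ 1).
have n2T : size L2 \in termsL L2.
  by rewrite mem_filter termL_last // mem_iota; sl.
have memT2 : forall y, y \in termsL L2 -> 0 < y <= size L2.
  by move=> y; rewrite mem_filter mem_iota => /andP[_ h]; sl.
case eT2: (termsL L2) n2T memT2 => [|t0 T2r] // _ memT2.
have lastT2 : last t0 T2r = size L2.
  have e : termsL L2 = rcons (filter (termL L2) (iota 1 (size L2).-1)) (size L2).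
    have e1 : iota 1 (size L2) = rcons (iota 1 (size L2).-1) (size L2).
      by rewrite -cats1 -[in LHS](prednK n2pos) -(addn1 (size L2).-1) iotaD /= add1n prednK.
    by rewrite /termsL e1 filter_rcons termL_last.
  by have := congr1 (last 0) e; rewrite eT2 last_rcons.
have hbase : baseL (r :: L2 ++ L1) = t0.+1 by rewrite /baseL eT eT2.
have t0in : 0 < t0 <= size L2 by apply: memT2; rewrite mem_head.
have dbase : decL (r :: L2 ++ L1) (baseL (r :: L2 ++ L1)) = decL L2 t0.
  by rewrite hbase decL_L2.
have lt0 : l <= t0 by move: hl; rewrite hbase; sl.
set NTM := (\prod_(t <- iota 2 (size L1) | ~~ termL (r :: L1) t) a (decL (r :: L1) t) 0%N)%R.
set NT2 := (\prod_(i <- iota 1 (size L2) | ~~ termL L2 i) a (decL L2 i) 0%N)%R.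
have AL : ahatL a (r :: L2 ++ L1) = (pp (fun y d => a (decL L2 y) d) t0 T2r *
    pp (fun y d => a (decL (r :: L1) y) d) 1 T1' * (a (deco r) 0%N * NT2 * NTM))%R.
  rewrite /ahatL (pairs_pp (fun y d => a (decL _ y) d)) eT eT2 /= pp_cat pp_shift last_map lastT2 addnC pp_shift.
  congr (_ * _ * _)%R.
  - apply: pp_eq_in => y yT d; rewrite add1n decL_L2 //.
    by apply: memT2; rewrite inE yT orbT.
  - by apply: pp_eq_in => y yT d; rewrite decL_L1 // memT1.
  rewrite -[(1%N :: iota 2 _)]/(iota 1 (size (r :: L2 ++ L1))) eI big_cons t1 /= big_cat !big_map /=.
  rewrite mulrA; apply: (congr2 (@GRing.mul A)); first apply: (congr2 (@GRing.mul A)); first by [].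
    rewrite /NT2 big_seq_cond [RHS]big_seq_cond; apply: eq_big => [j|j /andP[hj _]].
      case hj: (j \in iota 1 (size L2)) => //=.
      by rewrite add1n (termL_L2 r nc) //; move: hj; rewrite mem_iota; sl.
    by rewrite add1n decL_L2 //; move: hj; rewrite mem_iota; sl.
  rewrite /NTM big_seq_cond [RHS]big_seq_cond; apply: eq_big => [j|j /andP[hj _]].
    case hj: (j \in iota 2 (size L1)) => //=.
    by rewrite termL_L1 //; move: hj; rewrite mem_iota; sl.
  by rewrite decL_L1 //; move: hj; rewrite mem_iota; sl.
have A2 : ahatL a L2 = (pp (fun y d => a (decL L2 y) d) t0 T2r * NT2)%R.
  by rewrite /ahatL (pairs_pp (fun y d => a (decL _ y) d)) eT2.
have b2 : baseL L2 = t0 by rewrite /baseL eT2.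
have NTMe : (\prod_(i <- iota 1 (size (r :: L1)) | ~~ termL (r :: L1) i) a (decL (r :: L1) i) 0%N)%R
   = (if termL (r :: L1) 1 then NTM else a (deco r) 0%N * NTM)%R.
  by rewrite /= big_cons; case: (termL _ 1).
rewrite AL A2 b2 dbase hbase.
have -> : (t0.+1 - l = t0 - l + 1)%N by sl.
case tM1: (termL (r :: L1) 1).
  have eb : baseL (r :: L1) = 1 by rewrite /baseL eTM tM1.
  rewrite eb /ahatL NTMe tM1 eTM tM1 (pairs_pp (fun y d => a (decL _ y) d)) /= subnn.
  have -> : decL (r :: L1) 1 = deco r by [].
  ring.
have : (size L1).+1 \in T1'.
  rewrite mem_filter mem_iota; have := termL_last (L' := r :: L1) isT; rewrite /= => ->.
  have m1pos : 0 < size L1.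
    case E: (size L1) => //; move: tM1; rewrite /termL /= E; by [].
  by rewrite /=; sl.
case eT1: T1' => [|t1' T1r] // _.
have eb : baseL (r :: L1) = t1' by rewrite /baseL eTM tM1 eT1.
rewrite eb /ahatL NTMe tM1 eTM tM1 eT1 (pairs_pp (fun y d => a (decL _ y) d)) /=.
ring.
Qed.


Lemma ahatL_map (A : comPzRingType) (a : nat -> nat -> A) g L :
  {in L &, forall x y, cross (g x) (g y) = cross x y} -> {in L, forall x, deco (g x) = deco x} ->
  [/\ ahatL a (map g L) = ahatL a L, baseL (map g L) = baseL L &
      decL (map g L) (baseL (map g L)) = decL L (baseL L)].
Proof.
move=> hc hd; apply: ahatL_ext; first by rewrite size_map.
  exact: termL_map.
exact: decL_map.
Qed.

Lemma ahatL_nf (A : comPzRingType) (a : nat -> nat -> A) D L :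
  {subset L <= D} ->
  [/\ ahatL a (map (nf D) L) = ahatL a L, baseL (map (nf D) L) = baseL L &
      decL (map (nf D) L) (baseL (map (nf D) L)) = decL L (baseL L)].
Proof.
move=> hL; apply: ahatL_map => [x y xL yL|x xL] //.
by case: (good_nf D) => _ hc _; rewrite hc ?hL.
Qed.

Lemma labeled_norm D : labeled (norm D) = map (nf D) (labeled D).
Proof.
rewrite /labeled norm_nf size_map; apply: (ordr_map (good_nf D)) => //.
Qed.

End Helpers.
Import Helpers.

Local Open Scope ring_scope.


Theorem mainTheorem4 (A : comPzRingType) (a : nat -> nat -> A) (C : seq dchord) :
  is_Rdec C -> (2 <= size C)%N ->
  forall l : nat, (1 < l < base C)%N ->
  ahat a C * a (base_deco C) (base C - l)%N =
  ahat a (rsd1 C) * a (base_deco (rsd1 C)) (base (rsd1 C) - 1)%N *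
  (ahat a (rsd2 C) * a (base_deco (rsd2 C)) (base (rsd2 C) - l + 1)%N).
Proof.
move=> HC h2 l hl.
case/and4P: HC => _ Huniq _ _.
have hp := sortlo_perm C.
case Hs: (sortlo C) hp => [|r rest] hp.
  by move: h2; rewrite -(perm_size hp).
have szC : size C = (size rest).+1 by rewrite -(perm_size hp).
have rnr : r \notin rest.
  by have := Huniq; rewrite -(perm_uniq hp) /= => /andP[].
have restpos : (0 < size rest)%N by move: h2; rewrite szC.
case Hs2: (sortlo rest) => [|c1 srest].
  by move: restpos; rewrite -size_sortlo Hs2.
have c1r : c1 \in rest by rewrite -mem_sortlo Hs2 mem_head.
set K1 := Defs.comp rest c1.
set rest' := [seq e <- rest | e \notin K1].
have eKS : components (size rest) rest = K1 :: components (size rest).-1 rest'.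
  by case E: (size rest) restpos => [|k] // _; rewrite components_unfold Hs2.
have fc : first_comp C = K1 by rewrite /first_comp Hs /= eKS.
have K1sub : {subset K1 <= rest}.
  rewrite /K1; have [p [-> _]] := comp_eq c1r; by move=> x; rewrite mem_filter => /andP[].
have c1K : c1 \in K1 by rewrite /K1 /Defs.comp grow_mem_c.
have lt' : (size rest' < size rest)%N by apply: rest_lt.
have szK1 : (size K1 <= size rest)%N by apply: (@components_size (size rest)); rewrite eKS mem_head.
set L2 := ordr (size rest) K1.
set L1 := flatten [seq ordr (size rest') K | K <- components (size rest') rest'].
have eLC : labeled C = r :: L2 ++ L1.
  rewrite /labeled szC ordr_unfold Hs eKS /=; congr (r :: _ ++ _).
  have ec : components (size rest).-1 rest' = components (size rest') rest'.
    by apply: components_fuel => //; rewrite -ltnS prednK.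
  rewrite ec; congr flatten; apply/eq_in_map => K KI; apply: ordr_fuel.
    exact: leq_trans (components_size KI) (ltnW lt').
  exact: components_size KI.
set D1 := [seq e <- C | e \notin K1].
have rK1 : r \notin K1 by apply/negP => /K1sub; apply/negP.
have HsD1 : sortlo D1 = r :: rest'.
  rewrite /sortlo -filter_sort; [ | by move=> x y; apply: leq_total | by move=> y x z; apply: leq_trans].
  by rewrite -/(sortlo C) Hs /= rK1.
have szD1 : size D1 = (size rest').+1 by rewrite -size_sortlo HsD1.
have eLD1 : labeled D1 = r :: L1 by rewrite /labeled szD1 ordr_unfold HsD1.
have eL1 : labeled (rsd1 C) = map (nf D1) (r :: L1) by rewrite /rsd1 fc labeled_norm eLD1.
have eLK1 : labeled K1 = L2 by rewrite /labeled /L2; apply: ordr_fuel.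
have eL2 : labeled (rsd2 C) = map (nf K1) L2 by rewrite /rsd2 fc labeled_norm eLK1.
have sub1 : {subset r :: L1 <= D1}.
  by move=> x; rewrite -eLD1 (perm_mem (ordr_perm (leqnn _))).
have sub2 : {subset L2 <= K1}.
  by move=> x; rewrite (perm_mem (ordr_perm szK1)).
have [e1 e2 e3] := ahatL_nf a sub1.
have [f1 f2 f3] := ahatL_nf a sub2.
rewrite !base_deco_bridge !ahat_bridge !base_bridge eL1 eL2 e1 e3 e2 f1 f3 f2 eLC.
apply: core.
- move=> x y xL2 yL1; apply/negP => cxy.
  have xK : x \in K1 by apply: sub2.
  have [K KI yK] : exists2 K, K \in components (size rest') rest' & y \in K.
    case/flatten_mapP: yL1 => K KI yK; exists K => //.
    by rewrite -(perm_mem (ordr_perm (components_size KI))).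
  have yr' := components_sub KI yK.
  move: yr'; rewrite mem_filter => /andP[yK1 yr].
  have := closure_comp c1r yr xK; rewrite cross_sym => /(_ cxy) yK1'.
  by rewrite yK1' in yK1.
- by rewrite (perm_size (ordr_perm szK1)); case: (K1) c1K.
- by rewrite -eLC -base_bridge.
Qed.
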